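(* Let $n\ge1$, $d\ge2$. The elements $\delta_0,\dots,\delta_n\in\pi_1(\mathcal U_{n,d},[x_0^d+\cdots+x_n^d])$ pairwise commute and satisfy $\delta_0\delta_1\cdots\delta_n=1$.
   Context: $\mathcal U_{n,d}\subset\mathbf P^{N-1}$ is the complement of the discriminant in the projective space of degree-$d$ forms in $x_0,\dots,x_n$ (forms defining singular hypersurfaces removed). For $\kappa=0,\dots,n$, $\delta_\kappa$ is the class of the loop $t\in[0,2\pi]\mapsto\big[e^{it}x_\kappa^d+\sum_{\lambda\ne\kappa}x_\lambda^d\big]$ in the Fermat family $\{[a_0x_0^d+\cdots+a_nx_n^d]\}$. *)

(* Defs.v *)
From mathcomp Require Import all_boot all_algebra.
From mathcomp Require Import all_classical reals trigo Rstruct.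
From mathcomp Require Export complex.
Import GRing.Theory Num.Theory.

Set Implicit Arguments.
Unset Strict Implicit.
Unset Printing Implicit Defensive.

Local Open Scope ring_scope.
Local Open Scope complex_scope.

Definition RR : realType := Rdefinitions.R.
Definition CC := RR[i].

(* Exponent vectors of degree-d monomials in x_0,...,x_n. *)
Definition Mon (n d : nat) :=
  {m : {ffun 'I_n.+1 -> 'I_d.+1} | \sum_(i < n.+1) (m i : nat) == d}%N.

(* A degree-d form in x_0..x_n, given by its coefficient vector (a point of C^N). *)
Definition Form (n d : nat) := Mon n d -> CC.

Definition feval n d (a : Form n d) (x : 'I_n.+1 -> CC) : CC :=
  \sum_(m : Mon n d) a m * \prod_(i < n.+1) x i ^+ (val m i : nat).

Definition fderiv n d (a : Form n d) (j : 'I_n.+1) (x : 'I_n.+1 -> CC) : CC :=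
  \sum_(m : Mon n d) a m * (val m j : nat)%:R *
    \prod_(i < n.+1) (if i == j then x i ^+ (val m i : nat).-1
                      else x i ^+ (val m i : nat)).

Definition singular n d (a : Form n d) : Prop :=
  exists x : 'I_n.+1 -> CC, (exists i, x i != 0) /\
    feval a x = 0 /\ forall j, fderiv a j x = 0.

(* Representatives (nonzero coefficient vectors) of points of U_{n,d}. *)
Definition inU n d (a : Form n d) : Prop :=
  (exists m, a m != 0) /\ ~ singular a.

Definition peq n d (a b : Form n d) : Prop :=
  exists c : CC, c != 0 /\ forall m, b m = c * a m.

(* The topology of P^{N-1}: a point [a] is identified with the Hermitian
   projector a a^* / |a|^2 (a homeomorphism of P^{N-1} onto its image). *)
Definition proj n d (a : Form n d) (m1 m2 : Mon n d) : CC :=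
  a m1 * (a m2)^* / \sum_(m : Mon n d) a m * (a m)^*.

Definition unit_int (t : RR) : Prop := 0 <= t <= 1.

Definition pcont1 n d (g : RR -> Form n d) : Prop :=
  forall t, unit_int t -> forall e : RR, 0 < e -> exists2 del : RR, 0 < del &
    forall t', unit_int t' -> `|t' - t| < del ->
      forall m1 m2, `|proj (g t') m1 m2 - proj (g t) m1 m2| < e%:C.

Definition pcont2 n d (H : RR -> RR -> Form n d) : Prop :=
  forall s t, unit_int s -> unit_int t -> forall e : RR, 0 < e ->
    exists2 del : RR, 0 < del &
    forall s' t', unit_int s' -> unit_int t' -> `|s' - s| < del -> `|t' - t| < del ->
      forall m1 m2, `|proj (H s' t') m1 m2 - proj (H s t) m1 m2| < e%:C.

Definition loopU n d (b : Form n d) (g : RR -> Form n d) : Prop :=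
  (forall t, unit_int t -> inU (g t)) /\ pcont1 g /\ peq b (g 0) /\ peq b (g 1).

(* Homotopy rel endpoints, inside U_{n,d}, between two loops based at [b];
   equality in pi_1(U_{n,d}, [b]). *)
Definition homotopicU n d (b : Form n d) (g1 g2 : RR -> Form n d) : Prop :=
  exists H : RR -> RR -> Form n d,
    (forall s t, unit_int s -> unit_int t -> inU (H s t)) /\ pcont2 H /\
    (forall t, unit_int t -> peq (g1 t) (H 0 t) /\ peq (g2 t) (H 1 t)) /\
    (forall s, unit_int s -> peq b (H s 0) /\ peq b (H s 1)).

Definition concat n d (g1 g2 : RR -> Form n d) : RR -> Form n d :=
  fun t => if t <= 1/2 then g1 (2 * t) else g2 (2 * t - 1).

Definition prod_loops n d (b : Form n d) (gs : seq (RR -> Form n d)) :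
    RR -> Form n d :=
  if gs is g :: gs' then foldl (@concat n d) g gs' else (fun _ => b).

(* The Fermat-family form  sum_k c_k x_k^d. *)
Definition fermat n d (c : 'I_n.+1 -> CC) : Form n d :=
  fun m => \sum_(k < n.+1) (if (val m k : nat) == d then c k else 0).

Definition fermat0 n d : Form n d := fermat (fun _ => 1).

Definition expi (t : RR) : CC := cos t +i* sin t.

(* delta_kappa : t in [0,1] |-> [e^{2 pi i t} x_kappa^d + sum_{l <> kappa} x_l^d]
   (the loop t in [0,2pi] |-> ... of the paper, reparameterized by [0,1]). *)
Definition delta n d (k : 'I_n.+1) : RR -> Form n d :=
  fun t => fermat (fun l => if l == k then expi (2 * pi * t) else 1).

(* Main.v *)
Require Import Defs.
From mathcomp Require Import all_boot all_algebra.
From mathcomp Require Import all_classical reals trigo Rstruct.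
From mathcomp Require Import complex.
From mathcomp Require Import topology normedtype.
From mathcomp Require Import ring lra.
Import order.Order.TTheory GRing.Theory Num.Theory numFieldNormedType.Exports.
Local Open Scope ring_scope.
Local Open Scope complex_scope.

Lemma mon_other n d (m : Mon n d) (k l : 'I_n.+1) :
  (val m k : nat) = d -> l != k -> (val m l : nat) = 0%N.
Proof.
move=> hk hlk; have /eqP := valP m.
rewrite (bigD1 k) //= hk => /eqP.
rewrite -[X in _ == X]addn0 eqn_add2l sum_nat_eq0 => /forallP /(_ l).
by rewrite hlk /= => /eqP.
Qed.

Arguments mon_other {n d m k l}.

Definition mk n d (k : 'I_n.+1) : Mon n d.
Proof.
exists [ffun i => if i == k then ord_max else ord0].
rewrite (bigD1 k) //= ffunE eqxx /= big1 ?addn0 // => i /negbTE hi.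
by rewrite ffunE hi.
Defined.

Lemma mkE n d k i : (val (@mk n d k) i : nat) = if i == k then d else 0%N.
Proof. by rewrite /= ffunE; case: (i == k). Qed.

Lemma mk_uniq n d (m : Mon n d) k : (val m k : nat) = d -> m = mk n d k.
Proof.
move=> hk; apply: val_inj; apply/ffunP => i; apply: val_inj.
rewrite /= ffunE; case: eqP => [->|/eqP hik] //=.
exact: mon_other hk hik.
Qed.

Arguments mk_uniq {n d m k}.

Lemma fermatE n d (hd : (0 < d)%N) (c : 'I_n.+1 -> CC) (m : Mon n d) :
  fermat c m = if [pick k | (val m k : nat) == d] is Some k then c k else 0.
Proof.
rewrite /fermat; case: pickP => [k /eqP hk | h].
  rewrite (bigD1 k) //= hk eqxx big1 ?addr0 // => i hi.
  by rewrite (mon_other hk hi); case: eqP => // h0; move: hd; rewrite -h0.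
by rewrite big1 // => i _; rewrite h.
Qed.

Lemma pick_mk n d (hd : (0 < d)%N) k :
  [pick i | (val (mk n d k) i : nat) == d] = Some k.
Proof.
case: pickP => [i|h]; last by move: (h k); rewrite mkE !eqxx.
move=> /eqP; rewrite mkE; case: eqP => [->|_] // h0; by rewrite -h0 in hd.
Qed.

Lemma fermat_mk n d (hd : (0 < d)%N) (c : 'I_n.+1 -> CC) k : fermat c (mk n d k) = c k.
Proof. by rewrite fermatE // pick_mk. Qed.

Lemma fderiv_fermat n d (hd : (0 < d)%N) (c : 'I_n.+1 -> CC) j x :
  fderiv (@fermat n d c) j x = c j * d%:R * x j ^+ d.-1.
Proof.
rewrite /fderiv (bigD1 (mk n d j)) //= [X in _ + X]big1 ?addr0.
  rewrite fermat_mk // mkE eqxx (bigD1 j) //= eqxx mkE eqxx big1 ?mulr1 //.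
  by move=> i /negbTE hi; rewrite hi mkE hi expr0.
move=> m hm; rewrite fermatE //; case: pickP => [k /eqP hk|]; last by rewrite !mul0r.
case: (eqVneq j k) => [ejk|njk].
  by move: hm; rewrite (mk_uniq hk) ejk eqxx.
by rewrite (mon_other hk njk) mulr0 mul0r.
Qed.

Lemma inU_fermat n d (hd : (0 < d)%N) c : (forall k, c k != 0) -> inU (@fermat n d c).
Proof.
move=> hc; split.
  by exists (mk n d ord0); rewrite fermat_mk.
case=> x [[i hi] [_ /(_ i)]]; rewrite fderiv_fermat // => /eqP.
rewrite !mulf_eq0 (negbTE (hc i)) pnatr_eq0 expf_eq0 (negbTE hi) andbF orbF /=.
by case: d hd.
Qed.
Lemma cont_eps (R : realType) (f : R -> R) (u0 : R) : continuous f ->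
  forall e : R, 0 < e -> exists2 r : R, 0 < r & forall u, `|u - u0| < r -> `|f u - f u0| < e.
Proof.
move=> hf e e0.
have := (cvgrPdist_lt _ _).1 (hf u0) _ e0.
move=> /(_ _) /nbhs_ballP [r r0 hr]; exists r => // u hu.
rewrite distrC; apply: hr; rewrite /ball /= distrC //.
Qed.

Definition E (x : RR) : CC := expi (2 * pi * x).

Lemma E0 : E 0 = 1.
Proof. by rewrite /E /expi mulr0 cos0 sin0. Qed.

Lemma E_add1 x : E (x + 1) = E x.
Proof.
rewrite /E /expi mulrDr mulr1 (_ : 2 * pi = pi *+ 2); last by rewrite mulr_natl.
by rewrite cosD2pi sinD2pi.
Qed.

Lemma E1 : E 1 = 1.
Proof. by have := E_add1 0; rewrite add0r E0. Qed.

Lemma normc_split (a b : RR) : `|a +i* b| <= (`|a| + `|b|)%:C.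
Proof.
have -> : a +i* b = a%:C + 'i * b%:C by apply/eqP; rewrite eq_complex /= !mul0r !mul1r !subr0 !addr0 !add0r !eqxx.
apply: (le_trans (ler_normD _ _)); rewrite normrM rmorphD /=.
have hR (c : RR) : `|c%:C| = `|c|%:C.
  by rewrite normc_def /= expr0n addr0 sqrtr_sqr.
by rewrite !hR (_ : `|'i| = 1) ?mul1r // normc_def /= expr0n add0r expr1n sqrtr1.
Qed.

Lemma normE x : `|E x| = 1.
Proof. by rewrite normc_def /= cos2Dsin2 sqrtr1. Qed.

Lemma E_neq0 x : E x != 0.
Proof. by rewrite -normr_eq0 normE oner_eq0. Qed.

Lemma EJ x : E x * Num.conj (E x) = 1.
Proof. by rewrite -normCK normE expr1n. Qed.

Lemma E_cont (x0 : RR) (e : RR) : 0 < e ->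
  exists2 r : RR, 0 < r & forall x, `|x - x0| < r -> `|E x - E x0| < e%:C.
Proof.
move=> e0; have e20 : 0 < e / 2 by rewrite divr_gt0.
have [r1 r10 h1] := @cont_eps RR _ (2 * pi * x0) (@continuous_cos RR) _ e20.
have [r2 r20 h2] := @cont_eps RR _ (2 * pi * x0) (@continuous_sin RR) _ e20.
have p0 : 0 < 2 * pi :> RR by rewrite mulr_gt0 ?pi_gt0.
exists (Num.min r1 r2 / (2 * pi)).
  by rewrite divr_gt0 // lt_min r10 r20.
move=> x hx; apply: (le_lt_trans (normc_split _ _)); rewrite ltcR.
have hx' : `|2 * pi * x - 2 * pi * x0| < Num.min r1 r2.
  by rewrite -mulrBr normrM gtr0_norm // mulrC -ltr_pdivlMr.
rewrite [e]splitr; apply: ltrD.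
  by apply: h1; apply: (lt_le_trans hx'); rewrite ge_min lexx.
by apply: h2; apply: (lt_le_trans hx'); rewrite ge_min lexx orbT.
Qed.
Definition Fe n d (th : 'I_n.+1 -> RR) : Form n d := fermat (fun j => E (th j)).

Arguments Fe {n d}.

Definition S0 n d : CC :=
  \sum_(m : Mon n d | [pick k | (val m k : nat) == d] != None) 1.

Lemma S_Fe n d (hd : (0 < d)%N) th :
  \sum_(m : Mon n d) @Fe n d th m * (@Fe n d th m)^* = S0 n d.
Proof.
rewrite /S0 [RHS]big_mkcond; apply: eq_bigr => m _; rewrite /Fe fermatE //.
by case: pickP => [k _|_]; rewrite ?EJ ?mul0r //.
Qed.

Lemma S0_ge1 n d (hd : (0 < d)%N) : 1 <= `|S0 n d|.
Proof.
rewrite /S0 sumr_const.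
set N := #|_|.
have N1 : (0 < N)%N.
  apply/card_gt0P; exists (mk n d ord0); by rewrite unfold_in /= pick_mk.
by rewrite -[_ *+ N]mulr_natl mulr1 normr_nat ler1n.
Qed.

Lemma proj_close n d (hd : (0 < d)%N) (th th' : 'I_n.+1 -> RR) (e : RR) : 0 < e ->
  (forall j, `|E (th' j) - E (th j)| < (e / 2)%:C) ->
  forall m1 m2, `|Defs.proj (@Fe n d th') m1 m2 - Defs.proj (@Fe n d th) m1 m2| < e%:C.
Proof.
move=> e0 hj m1 m2.
have e0' : (0 : CC) < e%:C by rewrite ltcR.
rewrite /Defs.proj !S_Fe // -mulrBl normrM normfV.
have hS := S0_ge1 n d hd.
have hS0 : 0 < `|S0 n d| by apply: lt_le_trans hS; rewrite ltr01.
rewrite ltr_pdivrMr //; apply: (lt_le_trans _ (ler_wpM2l (ltW e0') hS)); rewrite mulr1.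
rewrite /Fe !fermatE //.
case: pickP => [k1 _|_]; last by rewrite !mul0r subrr normr0.
case: pickP => [k2 _|_]; last by rewrite conjC0 !mulr0 subrr normr0.
have -> : E (th' k1) * Num.conj (E (th' k2)) - E (th k1) * Num.conj (E (th k2)) =
  (E (th' k1) - E (th k1)) * Num.conj (E (th' k2)) + E (th k1) * Num.conj (E (th' k2) - E (th k2)).
  by rewrite rmorphB /= mulrBl mulrBr addrA subrK.
apply: (le_lt_trans (ler_normD _ _)).
rewrite !normrM !norm_conjC !normE mulr1 mul1r.
rewrite (_ : e%:C = (e / 2)%:C + (e / 2)%:C); last by rewrite -rmorphD /= -splitr.
by apply: ltrD.
Qed.

Lemma fin_min (I : finType) (P : I -> RR -> Prop) :
  (forall i, exists2 r : RR, 0 < r & P i r) ->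
  (forall i (r r' : RR), 0 < r' -> r' <= r -> P i r -> P i r') ->
  exists2 r : RR, 0 < r & forall i, P i r.
Proof.
move=> hP hmon.
suff [r r0 hr] : exists2 r : RR, 0 < r & forall i, i \in enum I -> P i r.
  by exists r => // i; apply: hr; rewrite mem_enum.
elim: (enum I) => [|i s [r r0 hr]]; first by exists 1.
have [ri ri0 hri] := hP i.
exists (Num.min r ri); first by rewrite lt_min r0 ri0.
move=> j; rewrite in_cons => /orP [/eqP ->|js].
  by apply: (hmon _ ri); rewrite ?lt_min ?r0 ?ri0 // ge_min lexx orbT.
by apply: (hmon _ r); rewrite ?lt_min ?r0 ?ri0 ?ge_min ?lexx //; apply: hr.
Qed.

Lemma pcont2_Fe n d (hd : (0 < d)%N) (Th : RR -> RR -> 'I_n.+1 -> RR) (L : RR) :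
  0 < L ->
  (forall s t s' t' j, unit_int s -> unit_int t -> unit_int s' -> unit_int t' ->
     `|Th s' t' j - Th s t j| <= L * (`|s' - s| + `|t' - t|)) ->
  pcont2 (fun s t => @Fe n d (Th s t)).
Proof.
move=> L0 hL s t us ut e e0.
have e20 : 0 < e / 2 by rewrite divr_gt0.
have [r r0 hr] := @fin_min 'I_n.+1
  (fun j r => forall x, `|x - Th s t j| < r -> `|E x - E (Th s t j)| < (e / 2)%:C)
  (fun j => @E_cont (Th s t j) _ e20)
  (fun j r r' _ hrr h x hx => h x (lt_le_trans hx hrr)).
have L20 : 0 < 2 * L by rewrite mulr_gt0.
exists (r / (2 * L)); first by rewrite divr_gt0.
move=> s' t' us' ut' hs ht m1 m2.
apply: proj_close => // j; apply: hr.
apply: (le_lt_trans (hL _ _ _ _ _ us ut us' ut')).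
rewrite -(ltr_pdivlMl _ _ L0).
have -> : L^-1 * r = r / (2 * L) + r / (2 * L).
  by field; rewrite gt_eqF.
by apply: ltrD.
Qed.

Lemma pcont1_of n d (g : RR -> Form n d) : pcont2 (fun _ t => g t) -> pcont1 g.
Proof.
move=> h t ut e e0.
have u0 : unit_int 0 by rewrite /unit_int lexx ler01.
have [del d0 hd] := h 0 t u0 ut e e0.
exists del => // t' ut' ht; apply: (hd 0 t') => //; by rewrite subr0 normr0.
Qed.
Definition Lip (K : RR) (f : RR -> RR) := forall t t', unit_int t -> unit_int t' ->
  `|f t' - f t| <= K * `|t' - t|.
Definition In01 (f : RR -> RR) := forall t, unit_int t -> 0 <= f t <= 1.
Definition glu (g h : RR -> RR) (t : RR) := if t <= 1/2 then g (2 * t) else h (2 * t - 1).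

Lemma Lip_sym K f : (forall t t', unit_int t -> unit_int t' -> t <= t' ->
  `|f t' - f t| <= K * `|t' - t|) -> Lip K f.
Proof.
move=> h t t' ut ut'; case: (leP t t') => htt; first exact: h.
by rewrite distrC (distrC t'); apply: h => //; apply: ltW.
Qed.

Lemma glu_lip g h K : 0 <= K -> Lip K g -> Lip K h -> g 1 = h 0 -> Lip (2 * K) (glu g h).
Proof.
move=> K0 hg hh e; apply: Lip_sym => t t' /andP[t0 t1] /andP[t'0 t'1] tt.
have -> : `|t' - t| = t' - t by rewrite ger0_norm // subr_ge0.
rewrite /glu; case: (lerP t' (1/2)) => h'.
  rewrite (le_trans tt h').
  apply: (le_trans (hg _ _ _ _)); first by rewrite /unit_int; apply/andP; split; lra.
    by rewrite /unit_int; apply/andP; split; lra.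
  by rewrite ger0_norm; lra.
case: (lerP t (1/2)) => h1.
  have -> : h (2 * t' - 1) - g (2 * t) = (h (2 * t' - 1) - h 0) + (g 1 - g (2 * t)).
    by rewrite e; ring.
  apply: (le_trans (ler_normD _ _)).
  have u1 : unit_int (2 * t' - 1) by rewrite /unit_int; apply/andP; split; lra.
  have u2 : unit_int (2 * t) by rewrite /unit_int; apply/andP; split; lra.
  have u0 : unit_int 0 by rewrite /unit_int; apply/andP; split; lra.
  have u1' : unit_int 1 by rewrite /unit_int; apply/andP; split; lra.
  have := hh _ _ u0 u1; have := hg _ _ u2 u1'.
  have -> : `|2 * t' - 1 - 0| = 2 * t' - 1 by rewrite ger0_norm; lra.
  have -> : `|1 - 2 * t| = 1 - 2 * t by rewrite ger0_norm; lra.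
  nra.
apply: (le_trans (hh _ _ _ _)); first by rewrite /unit_int; apply/andP; split; lra.
  by rewrite /unit_int; apply/andP; split; lra.
by rewrite ger0_norm; lra.
Qed.

Lemma glu_in01 g h : In01 g -> In01 h -> In01 (glu g h).
Proof.
move=> hg hh t /andP[t0 t1]; rewrite /glu; case: ifP => ht.
  by apply: hg; rewrite /unit_int; apply/andP; split; lra.
by apply: hh; move/negbT: ht; rewrite -ltNge => ht; rewrite /unit_int; apply/andP; split; lra.
Qed.

Lemma lin_homot (A B : RR -> RR) K : 0 <= K -> Lip K A -> Lip K B ->
  (forall t, unit_int t -> `|B t - A t| <= 1) ->
  forall s t s' t', unit_int s -> unit_int t -> unit_int s' -> unit_int t' ->
  `|((1 - s') * A t' + s' * B t') - ((1 - s) * A t + s * B t)|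
     <= (K + 1) * (`|s' - s| + `|t' - t|).
Proof.
move=> K0 hA hB hAB s t s' t' us ut /andP[s'0 s'1] ut'.
have -> : ((1 - s') * A t' + s' * B t') - ((1 - s) * A t + s * B t) =
  (1 - s') * (A t' - A t) + s' * (B t' - B t) + (s' - s) * (B t - A t) by ring.
apply: (le_trans (ler_normD _ _)); apply: (le_trans (lerD (ler_normD _ _) (lexx _))).
rewrite !normrM (ger0_norm s'0) ger0_norm ?subr_ge0 //.
have := hA _ _ ut ut'; have := hB _ _ ut ut'; have := hAB _ ut.
have := normr_ge0 (s' - s); have := normr_ge0 (t' - t).
have := normr_ge0 (B t - A t); have := normr_ge0 (A t' - A t); have := normr_ge0 (B t' - B t).
nra.
Qed.
Lemma peq_eq n d (a b : Form n d) : (forall m, b m = a m) -> peq a b.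
Proof. by move=> h; exists 1; split; [exact: oner_neq0 | move=> m; rewrite mul1r h]. Qed.

Lemma Fe_ext n d (th th' : 'I_n.+1 -> RR) :
  (forall j, E (th j) = E (th' j)) -> @Fe n d th = @Fe n d th'.
Proof.
move=> h; apply/funext => m; rewrite /Fe /fermat; apply: eq_bigr => k _; by rewrite h.
Qed.

Lemma Fe_1 n d (th : 'I_n.+1 -> RR) : (forall j, E (th j) = 1) -> @Fe n d th = @fermat0 n d.
Proof.
move=> h; apply/funext => m; rewrite /Fe /fermat0 /fermat; apply: eq_bigr => k _; by rewrite h.
Qed.

Lemma Fe_const n d (hd : (0 < d)%N) (x : RR) m :
  @Fe n d (fun _ => x) m = E x * @fermat0 n d m.
Proof. by rewrite /Fe /fermat0 !fermatE //; case: pickP => [k _|_]; rewrite ?mulr1 ?mulr0. Qed.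

Lemma delta_Fe n d (k : 'I_n.+1) t :
  delta (d:=d) k t = Fe (fun j => if j == k then t else 0).
Proof.
apply/funext => m; rewrite /Fe /delta /fermat; apply: eq_bigr => j _.
case: eqP => // _; by case: (j == k); rewrite ?E0.
Qed.

Lemma E2 : E 2 = 1.
Proof. by rewrite (_ : 2 = 1 + 1) // E_add1 E1. Qed.

Lemma homot_Fe n d (hd : (0 < d)%N) (b : Form n d) (g1 g2 : RR -> Form n d)
  (Th : RR -> RR -> 'I_n.+1 -> RR) (L : RR) :
  0 < L ->
  (forall s t s' t' j, unit_int s -> unit_int t -> unit_int s' -> unit_int t' ->
     `|Th s' t' j - Th s t j| <= L * (`|s' - s| + `|t' - t|)) ->
  (forall t, unit_int t -> peq (g1 t) (Fe (Th 0 t)) /\ peq (g2 t) (Fe (Th 1 t))) ->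
  (forall s, unit_int s -> peq b (Fe (Th s 0)) /\ peq b (Fe (Th s 1))) ->
  homotopicU b g1 g2.
Proof.
move=> L0 hL h1 h2; exists (fun s t => Fe (Th s t)); split.
  by move=> s t _ _; apply: inU_fermat => // j; apply: E_neq0.
split; first exact: pcont2_Fe hL.
by split.
Qed.

Lemma u01 : unit_int 0 /\ unit_int 1.
Proof. by split; rewrite /unit_int ?lexx ?ler01. Qed.

Lemma loop_delta n d (hd : (0 < d)%N) k : loopU (@fermat0 n d) (delta (d:=d) k).
Proof.
split.
  move=> t _; rewrite delta_Fe; apply: inU_fermat => // j; exact: E_neq0.
split.
  apply: pcont1_of.
  have -> : (fun (_ : RR) (t : RR) => delta (d:=d) k t) =
            (fun (_ : RR) (t : RR) => Fe (fun j : 'I_n.+1 => if j == k then t else 0)).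
    by apply/funext => s; apply/funext => t; rewrite delta_Fe.
  apply: (@pcont2_Fe _ _ hd _ 1) => // s t s' t' j _ _ _ _.
  case: eqP => _; last by rewrite subrr normr0 mul1r addr_ge0.
  by rewrite mul1r lerDr.
split; apply: peq_eq => m; rewrite delta_Fe Fe_1 // => j; case: eqP => _;
  by rewrite ?E0 ?E1.
Qed.

Lemma Lip_mono K K' f : K <= K' -> Lip K f -> Lip K' f.
Proof.
move=> hK h t t' ut ut'; apply: (le_trans (h _ _ ut ut')).
by apply: ler_wpM2r.
Qed.

Lemma abs_01 (a b : RR) : 0 <= a <= 1 -> 0 <= b <= 1 -> `|b - a| <= 1.
Proof. move=> /andP[? ?] /andP[? ?]; rewrite ler_norml; apply/andP; split; lra. Qed.

Definition cg n (k j : 'I_n.+1) (u : RR) : RR := if j == k then u else 0.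
Definition ch n (k l j : 'I_n.+1) (u : RR) : RR :=
  (if j == k then 1 else 0) + (if j == l then u else 0).
Arguments cg {n}.
Arguments ch {n}.
Definition C1 n (k l : 'I_n.+1) (t : RR) (j : 'I_n.+1) : RR := glu (cg k j) (ch k l j) t.

Arguments C1 {n}.

Lemma cg_lip n (k j : 'I_n.+1) : Lip 1 (cg k j).
Proof.
move=> t t' _ _; rewrite /cg mul1r; case: eqP => _ //.
by rewrite subrr normr0.
Qed.

Arguments cg_lip {n}.
Lemma ch_lip n (k l j : 'I_n.+1) : Lip 1 (ch k l j).
Proof.
move=> t t' _ _; rewrite /ch mul1r; case: (j == l).
  by rewrite opprD addrACA subrr add0r.
by rewrite subrr normr0.
Qed.

Arguments ch_lip {n}.
Lemma C1_lip n (k l j : 'I_n.+1) : Lip 2 (fun t => C1 k l t j).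
Proof.
have := @glu_lip _ _ 1 ler01 (cg_lip k j) (ch_lip k l j).
rewrite mulr1 => h; apply: h; rewrite /cg /ch; case: (j == l); rewrite ?addr0 //; case: (j == k).
Qed.

Lemma C1_in01 n (k l j : 'I_n.+1) : k != l -> In01 (fun t => C1 k l t j).
Proof.
move=> kl; apply: glu_in01 => t /andP[t0 t1]; rewrite /cg /ch.
  by case: eqP => _; rewrite ?lexx ?ler01 ?t0 ?t1.
case: (eqVneq j k) => [->|jk]; first by rewrite (negbTE kl) addr0 lexx ler01.
by case: eqP => _; rewrite add0r ?lexx ?ler01 ?t0 ?t1.
Qed.

Lemma concat_Fe n d (hd : (0 < d)%N) (k l : 'I_n.+1) t :
  concat (delta (d:=d) k) (delta l) t = Fe (C1 k l t).
Proof.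
rewrite /concat /C1 /glu; case: ifP => _; rewrite delta_Fe; apply: Fe_ext => j.
  by rewrite /cg.
rewrite /ch; case: (j == l); case: (j == k); rewrite ?add0r ?addr0 //.
  by rewrite [1 + _]addrC E_add1.
by rewrite E0 E1.
Qed.

Lemma comm_homot n d (hd : (0 < d)%N) (k l : 'I_n.+1) :
  homotopicU (@fermat0 n d) (concat (@delta n d k) (@delta n d l))
                            (concat (@delta n d l) (@delta n d k)).
Proof.
pose Th s t j := (1 - s) * C1 k l t j + s * C1 l k t j.
apply: (@homot_Fe _ _ hd _ _ _ Th (2 + 1)).
- by rewrite addr_gt0 ?ltr01.
- move=> s t s' t' j us ut us' ut'.
  apply: lin_homot => //; try exact: C1_lip.
  move=> t1 ut1; case: (eqVneq k l) => [<-|kl]; first by rewrite subrr normr0 ler01.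
  have lk : l != k by rewrite eq_sym.
  by apply: abs_01; [exact: (@C1_in01 _ k l j kl t1 ut1) | exact: (@C1_in01 _ l k j lk t1 ut1)].
- move=> t ut; split; apply: peq_eq => m; rewrite concat_Fe //;
    congr (Fe _ m); apply/funext => j; rewrite /Th; ring.
- move=> s us; split; apply: peq_eq => m; rewrite Fe_1 // => j; rewrite /Th /C1 /glu.
    have h0 : (0:RR) <= 1/2 by lra.
    rewrite h0 mulr0 /cg; case: (j == k); case: (j == l); rewrite ?mulr0 ?addr0 //; exact: E0.
  have h1 : ((1:RR) <= 1/2) = false by apply/negbTE; rewrite -ltNge; lra.
  rewrite h1 mulr1 /ch (_ : 2 - 1 = 1 :> RR); last by ring.
  rewrite (_ : forall a b : RR, (1 - s) * a + s * b = a + (b - a) * s); last by move=> a b; ring.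
  case: (j == k); case: (j == l); rewrite ?addr0 ?add0r ?subrr ?mul0r ?addr0;
    by rewrite ?oppr0 ?mul0r ?E_add1 ?E0 ?E1.
Qed.

Definition Qf (m i : nat) (u : RR) : RR :=
  if (i <= m)%N then 1 else if i == m.+1 then u else 0.

Fixpoint Pf (m i : nat) : RR -> RR :=
  match m with
  | 0%N => fun t => if i == 0%N then t else 0
  | m'.+1 => glu (Pf m' i) (Qf m' i)
  end.

Lemma Qf_lip m i : Lip 1 (Qf m i).
Proof.
move=> t t' _ _; rewrite /Qf mul1r; case: ifP => _; first by rewrite subrr normr0.
by case: ifP => _ //; rewrite subrr normr0.
Qed.

Lemma Qf_in01 m i : In01 (Qf m i).
Proof.
move=> t /andP[t0 t1]; rewrite /Qf; case: ifP => _; first by rewrite ler01 lexx.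
by case: ifP => _; rewrite ?t0 ?t1 ?lexx ?ler01.
Qed.

Lemma Pf0 m i : Pf m i 0 = 0.
Proof.
elim: m => [|m IH] /=; first by case: ifP.
by rewrite /glu ifT ?mulr0 //; lra.
Qed.

Lemma Pf1 m i : Pf m i 1 = if (i <= m)%N then 1 else 0.
Proof.
elim: m => [|m IH] /=; first by rewrite leqn0.
rewrite /glu ifF; last by apply/negbTE; rewrite -ltNge; lra.
rewrite (_ : 2 * 1 - 1 = 1 :> RR); last by ring.
rewrite /Qf [(i <= m.+1)%N]leq_eqVlt ltnS; case: (i == m.+1); rewrite ?orbT ?orbF //.
by case: ifP.
Qed.

Lemma Pf_lip m i : Lip (2 ^+ m) (Pf m i).
Proof.
elim: m => [|m IH] /=.
  move=> t t' _ _; rewrite expr0 mul1r; case: ifP => _ //.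
  by rewrite subrr normr0.
rewrite exprS; apply: glu_lip.
- by rewrite exprn_ge0 // ler0n.
- exact: IH.
- apply: Lip_mono (Qf_lip m i); rewrite exprn_ege1 //; lra.
by rewrite Pf1 /Qf; case: ifP => // _; case: ifP.
Qed.

Lemma Pf_in01 m i : In01 (Pf m i).
Proof.
elim: m => [|m IH] /=.
  by move=> t /andP[t0 t1]; case: ifP => _; rewrite ?t0 ?t1 ?lexx ?ler01.
by apply: glu_in01 => //; apply: Qf_in01.
Qed.

Lemma prod_Fe n d (hd : (0 < d)%N) m : (m <= n)%N -> forall t,
  foldl (@concat n d) (delta (inord 0)) [seq delta (inord i) | i <- iota 1 m] t =
  Fe (fun j : 'I_n.+1 => Pf m j t).
Proof.
elim: m => [|m IH] hm t.
  rewrite /=.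
  rewrite delta_Fe; apply: Fe_ext => j.
  by rewrite -val_eqE /= inordK.
rewrite (_ : iota 1 m.+1 = rcons (iota 1 m) m.+1); last by have := iotaD 1 m 1; rewrite addn1 add1n /= cats1.
rewrite map_rcons foldl_rcons /concat /= /glu.
case: ifP => _; first by rewrite IH // ltnW.
rewrite delta_Fe; apply: Fe_ext => j; rewrite /Qf.
have -> : (j == inord m.+1) = (nat_of_ord j == m.+1).
  by rewrite -val_eqE /= inordK // ltnS.
case: ifP => hj.
  by rewrite ifF // (eqP hj) ltnn.
by case: ifP; rewrite ?E0 ?E1.
Qed.

Lemma prod_homot n d (hd : (0 < d)%N) :
  homotopicU (@fermat0 n d)
    (prod_loops (@fermat0 n d) [seq @delta n d k | k <- enum 'I_n.+1])
    (fun _ => @fermat0 n d).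
Proof.
have hl : [seq @delta n d k | k <- enum 'I_n.+1] =
          [seq @delta n d (inord i) | i <- iota 0 n.+1].
  by rewrite -val_enum_ord -map_comp; apply: eq_map => i /=; rewrite inord_val.
rewrite hl /=.
pose Th s t (j : 'I_n.+1) := (1 - s) * Pf n j t + s * t.
apply: (@homot_Fe _ _ hd _ _ _ Th (2 ^+ n + 1)).
- by rewrite addr_gt0 ?ltr01 // exprn_gt0.
- move=> s t s' t' j us ut us' ut'.
  apply: lin_homot => //.
  + by rewrite exprn_ge0 // ler0n.
  + exact: Pf_lip.
  + apply: Lip_mono (_ : Lip 1 id); first by rewrite exprn_ege1 //; lra.
    by move=> x y _ _; rewrite mul1r.
  + by move=> t1 ut1; apply: abs_01 => //; apply: Pf_in01.
- move=> t ut; split; first apply: peq_eq => m.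
    rewrite prod_Fe //; congr (Fe _ m); apply/funext => j; rewrite /Th; ring.
  exists (E t); split; first exact: E_neq0.
  by move=> mm; rewrite -Fe_const //; congr (Fe _ mm); apply/funext => j; rewrite /Th; ring.
- move=> s us; split; apply: peq_eq => m; rewrite Fe_1 // => j; rewrite /Th.
    by rewrite Pf0 !mulr0 addr0 E0.
  rewrite Pf1 ifT; last by rewrite -ltnS ltn_ord.
  by rewrite !mulr1 subrK E1.
Qed.

Theorem mainTheorem17 (n d : nat) (hn : (1 <= n)%N) (hd : (2 <= d)%N) :
  (forall k : 'I_n.+1, loopU (@fermat0 n d) (@delta n d k)) /\
  (forall k l : 'I_n.+1,
     homotopicU (@fermat0 n d) (concat (@delta n d k) (@delta n d l))
                               (concat (@delta n d l) (@delta n d k))) /\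
  homotopicU (@fermat0 n d)
    (prod_loops (@fermat0 n d) [seq @delta n d k | k <- enum 'I_n.+1])
    (fun _ => @fermat0 n d).
Proof.
have hd0 : (0 < d)%N by apply: leq_trans hd.
split; first by move=> k; apply: loop_delta.
split; first by move=> k l; apply: comm_homot.
exact: prod_homot.
Qed.
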